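(* (Sufficiency) Let $f(\underline{X})=\sum_{\ell=1}^{L}\prod_{i=1}^{n} f_i^{(\ell)}(X_i)$ with arbitrary real functions $f_i^{(\ell)}$. If for every $i\in[n]$ and $\ell\in[L]$ the encoding of source $i$ perfectly secures $f_i^{(\ell)}(X_i)$, i.e. $\mathbb{E}[f_i^{(\ell)}(X_i)\mid g_i(X_i,K_i)]=\mathbb{E}[f_i^{(\ell)}(X_i)]$ for every observed value, then $f(\underline{X})$ is perfectly secured, i.e. $\mathbb{E}[f(\underline{X})\mid g(\underline{X})]=\mathbb{E}[f(\underline{X})]$ for every observed value. (Necessity) Suppose either (1) $f(\underline{X})=\sum_{i=1}^n f_i(X_i)$, or (2) $f(\underline{X})=\prod_{i=1}^n f_i(X_i)$ with $\prod_{i=1}^n\mathbb{E}[f_i(X_i)]\cdot\mathrm{var}[f_i(X_i)]\neq 0$. Then for any encoding scheme under which the receiver computes $f(\underline{X})$ exactly and $f(\underline{X})$ is perfectly secured, each $f_i(X_i)$ is recoverable by the receiver from $g_i(X_i,K_i)$ and $K_i$, and each $f_i(X_i)$ is perfectly secured, i.e. $\mathbb{E}[f_i(X_i)\mid g_i(X_i,K_i)]=\mathbb{E}[f_i(X_i)]$ for every observed value.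
   Context: Multi-source setting: $n$ sources; source $i$ produces $X_i$ from a finite alphabet $\mathcal{X}_i$, with $X_1,\dots,X_n$ mutually independent. Source $i$ shares a key $K_i$ uniform on $\{1,\dots,2^{k_i}\}$ with the receiver only; keys are independent of each other and of the sources. Source $i$ transmits $g_i(X_i,K_i)$, where for each key value the map $x\mapsto g_i(x,K_i)$ is such that the receiver (knowing all keys) can compute the desired function $f:\prod_i\mathcal{X}_i\to\mathbb{R}$ exactly. The eavesdropper observes $g(\underline{X})=(g_1(X_1,K_1),\dots,g_n(X_n,K_n))$ but no keys. Her distortion is $D_{ach}=\min_{\hat f}\mathbb{E}[(f(\underline{X})-\hat f(g(\underline{X})))^2]$ over all estimators $\hat f$, and $D_{max}=\mathrm{var}(f(\underline{X}))$. A real function $h$ of the sources is called perfectly secured if the eavesdropper's minimum mean squared error for estimating $h$ from her observation equals $\mathrm{var}(h)$, equivalently $\mathbb{E}[h\mid \text{observation}]=\mathbb{E}[h]$ for every observed value. *)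

(* Defs.v *)
From HB Require Import structures.
From mathcomp Require Import all_boot all_order all_algebra.
Set Implicit Arguments. Unset Strict Implicit. Unset Printing Implicit Defensive.
Import Order.TTheory GRing.Theory Num.Theory.
Local Open Scope ring_scope.

Definition is_dist (R : numDomainType) (T : finType) (p : T -> R) : Prop :=
  (forall x, 0 <= p x) /\ \sum_x p x = 1.

Definition expect (R : numDomainType) (T : finType) (P : T -> R) (h : T -> R) : R :=
  \sum_w P w * h w.

Definition variance (R : numDomainType) (T : finType) (P : T -> R) (h : T -> R) : R :=
  expect P (fun w => (h w - expect P h) ^+ 2).

Definition perfectly_secured (R : numFieldType) (T : finType) (Y : eqType)
    (P : T -> R) (obs : T -> Y) (h : T -> R) : Prop :=
  forall y : Y, 0 < \sum_(w | obs w == y) P w ->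
    (\sum_(w | obs w == y) P w * h w) / (\sum_(w | obs w == y) P w) = expect P h.

(* n sources; source i has alphabet X i, distribution p i, key K_i uniform on
   'I_(2 ^ k i) (i.e. 2^(k_i) values), and encoder g i : X i -> key -> Y i. *)

Definition src_space (n : nat) (X : 'I_n -> finType) (k : 'I_n -> nat) (i : 'I_n)
  : finType := (X i * 'I_(2 ^ k i))%type.

Definition src_prob (R : numFieldType) (n : nat) (X : 'I_n -> finType) (k : 'I_n -> nat)
    (p : forall i, X i -> R) (i : 'I_n) (w : src_space X k i) : R :=
  p i w.1 / (2 ^ k i)%:R.

Definition src_obs (n : nat) (X : 'I_n -> finType) (k : 'I_n -> nat) (Y : 'I_n -> eqType)
    (g : forall i, X i -> 'I_(2 ^ k i) -> Y i) (i : 'I_n) (w : src_space X k i) : Y i :=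
  g i w.1 w.2.

Definition joint_space (n : nat) (X : 'I_n -> finType) (k : 'I_n -> nat) : finType :=
  {dffun forall i : 'I_n, src_space X k i}.

Definition joint_prob (R : numFieldType) (n : nat) (X : 'I_n -> finType) (k : 'I_n -> nat)
    (p : forall i, X i -> R) (w : joint_space X k) : R :=
  \prod_(i < n) src_prob p (w i).

Definition joint_obs (n : nat) (X : 'I_n -> finType) (k : 'I_n -> nat) (Y : 'I_n -> eqType)
    (g : forall i, X i -> 'I_(2 ^ k i) -> Y i) (w : joint_space X k)
  : {dffun forall i : 'I_n, Y i} :=
  [ffun i => src_obs g (w i)].

Definition joint_keys (n : nat) (X : 'I_n -> finType) (k : 'I_n -> nat) (w : joint_space X k)
  : {dffun forall i : 'I_n, 'I_(2 ^ k i)} :=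
  [ffun i => (w i).2].

Definition joint_src (n : nat) (X : 'I_n -> finType) (k : 'I_n -> nat) (w : joint_space X k)
  : forall i : 'I_n, X i :=
  fun i => (w i).1.

Definition receiver_computes (R : numFieldType) (n : nat) (X : 'I_n -> finType)
    (k : 'I_n -> nat) (Y : 'I_n -> eqType) (g : forall i, X i -> 'I_(2 ^ k i) -> Y i)
    (f : (forall i : 'I_n, X i) -> R) : Prop :=
  exists dec : {dffun forall i : 'I_n, 'I_(2 ^ k i)} -> {dffun forall i : 'I_n, Y i} -> R,
    forall w : joint_space X k, dec (joint_keys w) (joint_obs g w) = f (joint_src w).

Definition joint_secured (R : numFieldType) (n : nat) (X : 'I_n -> finType)
    (k : 'I_n -> nat) (Y : 'I_n -> eqType) (p : forall i, X i -> R)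
    (g : forall i, X i -> 'I_(2 ^ k i) -> Y i) (f : (forall i : 'I_n, X i) -> R) : Prop :=
  perfectly_secured (joint_prob p) (joint_obs g) (fun w => f (joint_src w)).

Definition src_secured (R : numFieldType) (n : nat) (X : 'I_n -> finType)
    (k : 'I_n -> nat) (Y : 'I_n -> eqType) (p : forall i, X i -> R)
    (g : forall i, X i -> 'I_(2 ^ k i) -> Y i) (i : 'I_n) (h : X i -> R) : Prop :=
  perfectly_secured (@src_prob R n X k p i) (@src_obs n X k Y g i) (fun w => h w.1).

Definition src_recoverable (R : numFieldType) (n : nat) (X : 'I_n -> finType)
    (k : 'I_n -> nat) (Y : 'I_n -> eqType)
    (g : forall i, X i -> 'I_(2 ^ k i) -> Y i) (i : 'I_n) (h : X i -> R) : Prop :=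
  exists d : 'I_(2 ^ k i) -> Y i -> R, forall (x : X i) (key : 'I_(2 ^ k i)), d key (g i x key) = h x.

Definition src_mean (R : numFieldType) (n : nat) (X : 'I_n -> finType)
    (p : forall i, X i -> R) (i : 'I_n) (h : X i -> R) : R := expect (p i) h.
Definition src_var (R : numFieldType) (n : nat) (X : 'I_n -> finType)
    (p : forall i, X i -> R) (i : 'I_n) (h : X i -> R) : R := variance (p i) h.

(* Main.v *)
Require Import Defs.
From HB Require Import structures.
From mathcomp Require Import all_boot all_order all_algebra.
Import Order.TTheory GRing.Theory Num.Theory.
Local Open Scope ring_scope.
Set Implicit Arguments. Unset Strict Implicit.

Lemma sum_dffun_prod (R : comNzRingType) (I : finType) (T_ : I -> finType)
  (F : forall i, T_ i -> R) :
  \sum_(w : {dffun forall i, T_ i}) \prod_i F i (w i) = \prod_i \sum_(t : T_ i) F i t.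
Proof.
have E1 : \prod_i \sum_(t : T_ i) F i t =
   \prod_i \sum_(j in tagged_with T_ i) untag 0 (F i) j.
  by apply: eq_bigr => i _; rewrite (big_tag (fun i t => F i t)).
rewrite E1 bigA_distr_big_dep.
have := @big_fprod R 0 1 *%R +%R I T_ (fun i => [ffun t => F i t]).
move=> H.
transitivity (\sum_(t : fprod T_) \prod_i [ffun t => F i t] (t i)).
  rewrite (reindex (@dffun_of_fprod I T_)); last exact/onW_bij/dffun_of_fprod_bij.
  apply: eq_bigr => t _; apply: eq_bigr => i _.
  by rewrite !ffunE.
rewrite H; apply: eq_bigr => g _; apply: eq_bigr => i _.
rewrite /untag; case: eqP => // e; by rewrite ffunE.
Qed.

Lemma fiber_le (R : realFieldType) (T : finType) (Y : eqType) (P : T -> R) (obs : T -> Y) w :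
  (forall t, 0 <= P t) -> P w <= \sum_(t | obs t == obs w) P t.
Proof.
move=> P0; rewrite (bigD1 w) //= lerDl; apply: sumr_ge0 => t _; exact: P0.
Qed.

Lemma fiber_pos (R : realFieldType) (T : finType) (Y : eqType) (P : T -> R) (obs : T -> Y) y :
  (forall t, 0 <= P t) -> 0 < \sum_(t | obs t == y) P t ->
  exists t, obs t = y /\ 0 < P t.
Proof.
move=> P0 Hs.
have [t /andP[/eqP Ht Pt] | none] := pickP [pred t | (obs t == y) && (0 < P t)].
  by exists t.
suff : \sum_(t | obs t == y) P t = 0 by move=> E; rewrite E ltxx in Hs.
apply: big1 => t Ht; have := none t; rewrite /= Ht /= => /negbT.
by rewrite lt_def negb_and negbK P0 orbF => /eqP.
Qed.

Lemma secured_of_const (R : realFieldType) (T : finType) (Y : eqType) (P : T -> R)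
  (obs : T -> Y) (h : T -> R) (c : R) :
  (forall t, 0 <= P t) -> \sum_t P t = 1 ->
  (forall t, 0 < P t ->
     (\sum_(w | obs w == obs t) P w * h w) / (\sum_(w | obs w == obs t) P w) = c) ->
  perfectly_secured P obs h.
Proof.
move=> P0 P1 Hc.
pose S y := \sum_(w | obs w == y) P w.
pose A y := \sum_(w | obs w == y) P w * h w.
have Hy : forall y, 0 < S y -> A y / S y = c.
  move=> y /(@fiber_pos _ _ _ _ _ _ P0) [t [<- Pt]]; exact: Hc.
suff Ec : expect P h = c by move=> y Sy; rewrite Ec; exact: Hy.
have key : forall t, P t / S (obs t) * (A (obs t) - c * S (obs t)) = 0.
  move=> t; have [->|nz] := eqVneq (S (obs t)) 0; first by rewrite invr0 !mulr0 mul0r.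
  have Spos : 0 < S (obs t) by rewrite lt_def nz sumr_ge0.
  by rewrite -(Hy _ Spos) divfK // subrr mulr0.
have E0 : \sum_t P t / S (obs t) * (A (obs t) - c * S (obs t)) = 0 by rewrite big1.
have E1 : forall t, A (obs t) - c * S (obs t) =
   \sum_w (if obs w == obs t then P w * h w - c * P w else 0).
  move=> t; rewrite /A /S mulr_sumr -sumrB big_mkcond /=.
  by apply: eq_bigr => w _; case: ifP.
have E0' : \sum_w \sum_t P t / S (obs t) *
     (if obs w == obs t then P w * h w - c * P w else 0) = 0.
  rewrite exchange_big /=; rewrite -[RHS]E0; apply: eq_bigr => t _; by rewrite E1 mulr_sumr.
have E2 : forall w, \sum_t P t / S (obs t) *
     (if obs w == obs t then P w * h w - c * P w else 0) = P w * h w - c * P w.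
  move=> w.
  transitivity ((\sum_(t | obs t == obs w) P t) / S (obs w) * (P w * h w - c * P w)).
    rewrite mulr_suml mulr_suml [RHS]big_mkcond /=; apply: eq_bigr => t _.
    rewrite eq_sym; case: eqP => [->|_]; by rewrite ?mulr0.
  rewrite -/(S (obs w)).
  have [E|nz] := eqVneq (S (obs w)) 0.
    have Pw : P w = 0 by apply/le_anti; rewrite P0 andbT -E fiber_le.
    by rewrite Pw E !mul0r mulr0 subrr.
  by rewrite divff // mul1r.
have E0'' : \sum_w (P w * h w - c * P w) = 0.
  by rewrite -[RHS]E0'; apply: eq_bigr => w _; rewrite E2.
rewrite /expect; apply/eqP; rewrite -subr_eq0 -[c]mulr1 -P1 mulr_sumr -sumrB.
by rewrite -[X in _ == X]E0''; apply/eqP/eq_bigr => w _; rewrite [c * _]mulrC.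
Qed.

Definition fib (R : numFieldType) (n : nat) (X : 'I_n -> finType) (k : 'I_n -> nat)
  (Y : 'I_n -> eqType) (p : forall i, X i -> R) (g : forall i, X i -> 'I_(2 ^ k i) -> Y i)
  (i : 'I_n) (y : Y i) (h : X i -> R) : R :=
  \sum_(t : src_space X k i | src_obs g t == y) src_prob p t * h t.1.

Definition tot (R : numFieldType) (n : nat) (X : 'I_n -> finType) (k : 'I_n -> nat)
  (p : forall i, X i -> R) (i : 'I_n) (h : X i -> R) : R :=
  \sum_(t : src_space X k i) src_prob p t * h t.1.

Lemma fiber_prod (R : numFieldType) (n : nat) (X : 'I_n -> finType) (k : 'I_n -> nat)
  (Y : 'I_n -> eqType) (p : forall i, X i -> R) (g : forall i, X i -> 'I_(2 ^ k i) -> Y i)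
  (F : forall i, X i -> R) (y : {dffun forall i, Y i}) :
  \sum_(w : joint_space X k | joint_obs g w == y)
      joint_prob p w * \prod_i F i (joint_src w i)
  = \prod_i fib p g (y i) (F i).
Proof.
rewrite big_mkcond /=.
transitivity (\sum_(w : joint_space X k) \prod_i
   (if src_obs g (w i) == y i then src_prob p (w i) * F i (w i).1 else 0)).
  apply: eq_bigr => w _.
  case: (boolP [forall i, src_obs g (w i) == y i]) => [/forallP H | /forallPn [i Hi]].
    have -> : joint_obs g w == y.
      by apply/eqP/ffunP => i; rewrite ffunE; apply/eqP/H.
    rewrite /joint_prob -big_split /=; apply: eq_bigr => i _; by rewrite H.
  have -> : (joint_obs g w == y) = false.
    apply/negbTE; apply: contra Hi => /eqP <-; by rewrite ffunE.
  by rewrite (bigD1 i) //= (negbTE Hi) mul0r.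
apply: etrans (@sum_dffun_prod R _ (src_space X k)
  (fun i t => if src_obs g t == y i then src_prob p t * F i t.1 else 0)) _.
apply: eq_bigr => i _; rewrite /fib [RHS]big_mkcond; apply: eq_bigr => t _.
by case: ifP.
Qed.

Lemma full_prod (R : numFieldType) (n : nat) (X : 'I_n -> finType) (k : 'I_n -> nat)
  (p : forall i, X i -> R) (F : forall i, X i -> R) :
  \sum_(w : joint_space X k) joint_prob p w * \prod_i F i (joint_src w i)
  = \prod_i tot k p (F i).
Proof.
transitivity (\sum_(w : joint_space X k) \prod_i (src_prob p (w i) * F i (w i).1)).
  by apply: eq_bigr => w _; rewrite /joint_prob -big_split.
exact: (@sum_dffun_prod R _ (src_space X k) (fun i t => src_prob p t * F i t.1)).
Qed.

Definition fibP (R : numFieldType) (n : nat) (X : 'I_n -> finType) (k : 'I_n -> nat)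
  (Y : 'I_n -> eqType) (p : forall i, X i -> R) (g : forall i, X i -> 'I_(2 ^ k i) -> Y i)
  (i : 'I_n) (y : Y i) : R :=
  \sum_(t : src_space X k i | src_obs g t == y) src_prob p t.

Definition rr (R : numFieldType) (n : nat) (X : 'I_n -> finType) (k : 'I_n -> nat)
  (Y : 'I_n -> eqType) (p : forall i, X i -> R) (g : forall i, X i -> 'I_(2 ^ k i) -> Y i)
  (i : 'I_n) (h : X i -> R) (t : src_space X k i) : R :=
  fib p g (src_obs g t) h / fibP p g (src_obs g t).

Lemma fib1 (R : numFieldType) (n : nat) (X : 'I_n -> finType) (k : 'I_n -> nat)
  (Y : 'I_n -> eqType) (p : forall i, X i -> R) (g : forall i, X i -> 'I_(2 ^ k i) -> Y i)
  (i : 'I_n) (y : Y i) : fib p g y (fun _ => 1) = fibP p g y.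
Proof. by apply: eq_bigr => t _; rewrite mulr1. Qed.

Lemma fib_exp (R : numFieldType) (n : nat) (X : 'I_n -> finType) (k : 'I_n -> nat)
  (Y : 'I_n -> eqType) (p : forall i, X i -> R) (g : forall i, X i -> 'I_(2 ^ k i) -> Y i)
  (i : 'I_n) (y : Y i) (h : X i -> R) (b : bool) :
  fib p g y (fun x => h x ^+ b) = if b then fib p g y h else fibP p g y.
Proof. by case: b; apply: eq_bigr => t _; rewrite ?expr1 ?expr0 ?mulr1. Qed.

Lemma prod_sel (R : comNzRingType) (n : nat) (G : 'I_n -> R) (i : 'I_n) :
  \prod_j G j ^+ (j == i) = G i.
Proof.
rewrite (bigD1 i) //= eqxx expr1 big1 ?mulr1 // => j /negbTE ->; exact: expr0.
Qed.

Lemma src_prob_ge0 (R : realFieldType) (n : nat) (X : 'I_n -> finType) (k : 'I_n -> nat)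
  (p : forall i, X i -> R) (i : 'I_n) (t : src_space X k i) :
  is_dist (p i) -> 0 <= src_prob p t.
Proof.
move=> [H _]; rewrite /src_prob divr_ge0 // ler0n //.
Qed.

Lemma tot_eq (R : realFieldType) (n : nat) (X : 'I_n -> finType) (k : 'I_n -> nat)
  (p : forall i, X i -> R) (i : 'I_n) (h : X i -> R) :
  tot k p h = \sum_x p i x * h x.
Proof.
rewrite /tot -(pair_big predT predT (fun x (key : 'I_(2 ^ k i)) => src_prob p (x, key) * h x)) /=.
apply: eq_bigr => x _; rewrite /src_prob /= sumr_const card_ord.
have nz : ((2 ^ k i)%:R : R) != 0 by rewrite pnatr_eq0 -lt0n expn_gt0.
by rewrite -(mulr_natr (p i x / _ * h x) (2 ^ k i)) mulrAC divfK.
Qed.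

Lemma src_prob_sum1 (R : realFieldType) (n : nat) (X : 'I_n -> finType) (k : 'I_n -> nat)
  (p : forall i, X i -> R) (i : 'I_n) :
  is_dist (p i) -> \sum_(t : src_space X k i) src_prob p t = 1.
Proof.
move=> [_ H]; rewrite -H.
have := @tot_eq R n X k p i (fun _ => 1); rewrite /tot.
under eq_bigr do rewrite mulr1. under [in X in _ = X -> _]eq_bigr do rewrite mulr1.
by [].
Qed.

Lemma key0 (k : nat) : (0 < 2 ^ k)%N.
Proof. by rewrite expn_gt0. Qed.

Lemma exists_pos (R : realFieldType) (n : nat) (X : 'I_n -> finType) (k : 'I_n -> nat)
  (p : forall i, X i -> R) (i : 'I_n) :
  is_dist (p i) -> exists t : src_space X k i, 0 < src_prob p t.
Proof.
move=> [H0 H1].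
have [x Hx | none] := pickP [pred x | 0 < p i x].
  exists (x, Ordinal (key0 (k i))); rewrite /src_prob divr_gt0 // ltr0n key0 //.
suff : \sum_x p i x = 0 by rewrite H1 => /eqP; rewrite oner_eq0.
apply: big1 => x _; have := none x; rewrite /= lt_def H0 andbT => /negbFE/eqP //.
Qed.

Lemma choose_point (n : nat) (X : 'I_n -> finType) (k : 'I_n -> nat)
  (P : forall j, pred (src_space X k j)) :
  (forall j, exists t, P j t) -> exists w : joint_space X k, forall j, P j (w j).
Proof.
move=> H; exists (finfun (fun j => xchoose (H j))) => j; rewrite ffunE; exact: xchooseP.
Qed.

Lemma joint_ratio (R : numFieldType) (n : nat) (X : 'I_n -> finType) (k : 'I_n -> nat)
  (Y : 'I_n -> eqType) (p : forall i, X i -> R) (g : forall i, X i -> 'I_(2 ^ k i) -> Y i)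
  (F : forall j, X j -> R) (w : joint_space X k) :
  (\sum_(w' : joint_space X k | joint_obs g w' == joint_obs g w)
      joint_prob p w' * \prod_j F j (joint_src w' j)) /
  (\sum_(w' : joint_space X k | joint_obs g w' == joint_obs g w) joint_prob p w')
  = \prod_j rr p g (F j) (w j).
Proof.
have D : \sum_(w' : joint_space X k | joint_obs g w' == joint_obs g w) joint_prob p w'
   = \prod_j fibP p g (joint_obs g w j).
  rewrite -(eq_bigr _ (fun j _ => fib1 p g (joint_obs g w j))) -fiber_prod.
  by apply: eq_bigr => w' _; rewrite big1 ?mulr1.
rewrite D fiber_prod -prodfV -big_split /=; apply: eq_bigr => j _.
by rewrite /rr ffunE.
Qed.

Lemma fiberD (R : numFieldType) (n : nat) (X : 'I_n -> finType) (k : 'I_n -> nat)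
  (Y : 'I_n -> eqType) (p : forall i, X i -> R) (g : forall i, X i -> 'I_(2 ^ k i) -> Y i)
  (y : {dffun forall i, Y i}) :
  \sum_(w' : joint_space X k | joint_obs g w' == y) joint_prob p w'
   = \prod_j fibP p g (y j).
Proof.
rewrite -(eq_bigr _ (fun j _ => fib1 p g (y j))) -fiber_prod.
by apply: eq_bigr => w' _; rewrite big1 ?mulr1.
Qed.

Lemma suff_part (R : realFieldType) (n : nat) (X : 'I_n -> finType)
    (p : forall i : 'I_n, X i -> R) (k : 'I_n -> nat) (Y : 'I_n -> eqType)
    (g : forall i : 'I_n, X i -> 'I_(2 ^ k i) -> Y i) :
  (forall i : 'I_n, is_dist (p i)) ->
  forall (L : nat) (F : 'I_L -> forall i : 'I_n, X i -> R),
     (forall (i : 'I_n) (l : 'I_L), src_secured p g (F l i)) ->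
     joint_secured p g (fun x => \sum_(l < L) \prod_(i < n) F l i (x i)).
Proof.
move=> Hd L F Hs y Dpos.
rewrite fiberD in Dpos *.
have Spos : forall j, 0 < fibP p g (y j).
  move=> j; rewrite lt_def sumr_ge0 ?andbT; last by move=> t _; exact: src_prob_ge0.
  apply/negP => /eqP E; move: Dpos; suff -> : \prod_j fibP p g (y j) = 0 by rewrite ltxx.
  by apply/eqP/prodf_eq0; exists j => //; rewrite E.
have Hf : forall j l, fib p g (y j) (F l j) = tot k p (F l j) * fibP p g (y j).
  move=> j l; have := Hs j l (y j) (Spos j) => E.
  by rewrite -[LHS](divfK (lt0r_neq0 (Spos j))); congr (_ * _).
transitivity (\sum_l \prod_j tot k p (F l j)).
  rewrite (eq_bigr (fun w => \sum_l joint_prob p w * \prod_i F l i (joint_src w i)));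
    last by move=> w _; rewrite mulr_sumr.
  rewrite exchange_big /= mulr_suml; apply: eq_bigr => l _.
  rewrite fiber_prod (eq_bigr _ (fun j _ => Hf j l)) big_split /= mulfK //.
  by apply/prodf_neq0 => j _; exact: lt0r_neq0.
rewrite /expect (eq_bigr (fun w => \sum_l joint_prob p w * \prod_i F l i (joint_src w i)));
  last by move=> w _; rewrite mulr_sumr.
rewrite exchange_big /=; apply: eq_bigr => l _; by rewrite full_prod.
Qed.

Definition upd (n : nat) (X : 'I_n -> finType) (k : 'I_n -> nat) (w0 : joint_space X k)
  (i : 'I_n) (t : src_space X k i) : joint_space X k := finfun (dfwith (fun j => w0 j) t).

Lemma upd_in (n : nat) (X : 'I_n -> finType) (k : 'I_n -> nat) (w0 : joint_space X k)
  (i : 'I_n) (t : src_space X k i) : upd w0 t i = t.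
Proof. by rewrite /upd ffunE dfwith_in. Qed.

Lemma upd_out (n : nat) (X : 'I_n -> finType) (k : 'I_n -> nat) (w0 : joint_space X k)
  (i j : 'I_n) (t : src_space X k i) : i != j -> upd w0 t j = w0 j.
Proof. by move=> ij; rewrite /upd ffunE dfwith_out. Qed.

Lemma fibP_pos (R : realFieldType) (n : nat) (X : 'I_n -> finType) (k : 'I_n -> nat)
  (Y : 'I_n -> eqType) (p : forall i, X i -> R) (g : forall i, X i -> 'I_(2 ^ k i) -> Y i)
  (i : 'I_n) (t : src_space X k i) :
  is_dist (p i) -> 0 < src_prob p t -> 0 < fibP p g (src_obs g t).
Proof.
move=> Hd Ht; apply: (lt_le_trans Ht); rewrite /fibP; apply: fiber_le.
by move=> s; exact: src_prob_ge0.
Qed.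

Lemma rr_exp (R : realFieldType) (n : nat) (X : 'I_n -> finType) (k : 'I_n -> nat)
  (Y : 'I_n -> eqType) (p : forall i, X i -> R) (g : forall i, X i -> 'I_(2 ^ k i) -> Y i)
  (i : 'I_n) (h : X i -> R) (b : bool) (t : src_space X k i) :
  is_dist (p i) -> 0 < src_prob p t ->
  rr p g (fun x => h x ^+ b) t = rr p g h t ^+ b.
Proof.
move=> Hd Ht; rewrite /rr fib_exp; case: b; first by rewrite expr1.
by rewrite expr0 divff // lt0r_neq0 // (fibP_pos g Hd Ht).
Qed.

Lemma const_to_secured (R : realFieldType) (n : nat) (X : 'I_n -> finType)
  (k : 'I_n -> nat) (Y : 'I_n -> eqType) (p : forall i, X i -> R)
  (g : forall i, X i -> 'I_(2 ^ k i) -> Y i) (i : 'I_n) (h : X i -> R) :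
  is_dist (p i) ->
  (forall t t' : src_space X k i, 0 < src_prob p t -> 0 < src_prob p t' ->
     rr p g h t = rr p g h t') ->
  src_secured p g h.
Proof.
move=> Hd Hc; have [t0 Ht0] := @exists_pos R n X k p i Hd.
apply: (@secured_of_const R _ _ _ _ _ (rr p g h t0)).
- by move=> t; exact: src_prob_ge0.
- exact: src_prob_sum1.
- by move=> t Ht; apply: (Hc t t0).
Qed.

Lemma pos_point (R : realFieldType) (n : nat) (X : 'I_n -> finType) (k : 'I_n -> nat)
  (p : forall i, X i -> R) :
  (forall i, is_dist (p i)) ->
  exists w0 : joint_space X k, forall j, 0 < src_prob p (w0 j).
Proof.
move=> Hd; apply: (@choose_point n X k (fun j t => 0 < src_prob p t)) => j.
exact: exists_pos.
Qed.

Lemma joint_pos_D (R : realFieldType) (n : nat) (X : 'I_n -> finType) (k : 'I_n -> nat)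
  (Y : 'I_n -> eqType) (p : forall i, X i -> R) (g : forall i, X i -> 'I_(2 ^ k i) -> Y i)
  (w : joint_space X k) :
  (forall i, is_dist (p i)) -> (forall j, 0 < src_prob p (w j)) ->
  0 < \sum_(w' : joint_space X k | joint_obs g w' == joint_obs g w) joint_prob p w'.
Proof.
move=> Hd Hw; rewrite fiberD; apply: prodr_gt0 => j _; rewrite ffunE.
exact: fibP_pos.
Qed.

Lemma upd_pos (R : realFieldType) (n : nat) (X : 'I_n -> finType) (k : 'I_n -> nat)
  (p : forall i, X i -> R) (w0 : joint_space X k) (i : 'I_n) (t : src_space X k i) :
  (forall j, 0 < src_prob p (w0 j)) -> 0 < src_prob p t ->
  forall j, 0 < src_prob p (upd w0 t j).
Proof.
move=> H0 Ht j; case: (eqVneq i j) => [<-|ij]; first by rewrite upd_in.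
by rewrite upd_out.
Qed.

Lemma sum_upd (R : comNzRingType) (n : nat) (X : 'I_n -> finType) (k : 'I_n -> nat)
  (G : forall j, src_space X k j -> R) (w0 : joint_space X k) (i : 'I_n) (t : src_space X k i) :
  \sum_j G j (upd w0 t j) = G i t + \sum_(j | j != i) G j (w0 j).
Proof.
rewrite (bigD1 i) //= upd_in; congr (_ + _); apply: eq_bigr => j ji.
by rewrite upd_out // eq_sym.
Qed.

Lemma prod_upd (R : comNzRingType) (n : nat) (X : 'I_n -> finType) (k : 'I_n -> nat)
  (G : forall j, src_space X k j -> R) (w0 : joint_space X k) (i : 'I_n) (t : src_space X k i) :
  \prod_j G j (upd w0 t j) = G i t * \prod_(j | j != i) G j (w0 j).
Proof.
rewrite (bigD1 i) //= upd_in; congr (_ * _); apply: eq_bigr => j ji.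
by rewrite upd_out // eq_sym.
Qed.

Lemma upd_keys (n : nat) (X : 'I_n -> finType) (k : 'I_n -> nat) (w0 : joint_space X k)
  (i : 'I_n) (x : X i) (key : 'I_(2 ^ k i)) :
  joint_keys (upd w0 ((x, key) : src_space X k i)) = finfun (dfwith (fun j => (w0 j).2) key).
Proof.
apply/ffunP => j; rewrite !ffunE; case: (eqVneq i j) => [<-|ij].
  by rewrite !dfwith_in.
by rewrite !dfwith_out.
Qed.

Lemma upd_obs (n : nat) (X : 'I_n -> finType) (k : 'I_n -> nat) (Y : 'I_n -> eqType)
  (g : forall i, X i -> 'I_(2 ^ k i) -> Y i) (w0 : joint_space X k)
  (i : 'I_n) (x : X i) (key : 'I_(2 ^ k i)) :
  joint_obs g (upd w0 ((x, key) : src_space X k i)) =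
  finfun (dfwith (fun j => src_obs g (w0 j)) (g i x key)).
Proof.
apply/ffunP => j; rewrite !ffunE; case: (eqVneq i j) => [<-|ij].
  by rewrite !dfwith_in.
by rewrite !dfwith_out.
Qed.

Lemma nec_sum (R : realFieldType) (n : nat) (X : 'I_n -> finType)
    (p : forall i : 'I_n, X i -> R) (k : 'I_n -> nat) (Y : 'I_n -> eqType)
    (g : forall i : 'I_n, X i -> 'I_(2 ^ k i) -> Y i) :
  (forall i : 'I_n, is_dist (p i)) ->
  forall fi : forall i : 'I_n, X i -> R,
     receiver_computes g (fun x => \sum_(i < n) fi i (x i)) ->
     joint_secured p g (fun x => \sum_(i < n) fi i (x i)) ->
     forall i : 'I_n, src_recoverable g (fi i) /\ src_secured p g (fi i).
Proof.
move=> Hd fi [dec Hdec] Hsec i.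
have [w0 Hw0] := @pos_point R n X k p Hd.
split.
  exists (fun key yv => dec (finfun (dfwith (fun j => (w0 j).2) key))
     (finfun (dfwith (fun j => src_obs g (w0 j)) yv)) - \sum_(j | j != i) fi j (w0 j).1).
  move=> x key; rewrite -(upd_keys w0 x key) -(upd_obs g w0 x key) Hdec /joint_src.
  rewrite (sum_upd (fun j t => fi j t.1)) /=; exact: addrK.
have HM : forall w : joint_space X k, (forall j, 0 < src_prob p (w j)) ->
    \sum_j rr p g (fi j) (w j) =
    expect (@joint_prob R n X k p) (fun w => \sum_(i < n) fi i (joint_src w i)).
  move=> w Hw; rewrite -(Hsec _ (@joint_pos_D R n X k Y p g w Hd Hw)).
  rewrite (eq_bigr (fun w' => \sum_i joint_prob p w' *
        \prod_j (fun j x => fi j x ^+ (j == i)) j (joint_src w' j))); last first.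
    move=> w' _; rewrite mulr_sumr; apply: eq_bigr => l _.
    by rewrite (prod_sel (fun j => fi j (joint_src w' j))).
  rewrite exchange_big /= mulr_suml; apply: eq_bigr => l _.
  rewrite (@joint_ratio R n X k Y p g (fun j x => fi j x ^+ (j == l)) w) /=.
  rewrite (eq_bigr (fun j => rr p g (fi j) (w j) ^+ (j == l))).
    by rewrite (prod_sel (fun j => rr p g (fi j) (w j))).
  move=> j _; exact: rr_exp.
apply: const_to_secured => // t t' Ht Ht'.
have E := HM _ (upd_pos Hw0 Ht); have E' := HM _ (upd_pos Hw0 Ht').
rewrite (sum_upd (fun j t => rr p g (fi j) t)) in E.
rewrite (sum_upd (fun j t => rr p g (fi j) t)) in E'.
by apply: (addIr (\sum_(j | j != i) rr p g (fi j) (w0 j))); rewrite E E'.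
Qed.

Lemma nec_prod (R : realFieldType) (n : nat) (X : 'I_n -> finType)
    (p : forall i : 'I_n, X i -> R) (k : 'I_n -> nat) (Y : 'I_n -> eqType)
    (g : forall i : 'I_n, X i -> 'I_(2 ^ k i) -> Y i) :
  (forall i : 'I_n, is_dist (p i)) ->
  forall fi : forall i : 'I_n, X i -> R,
     \prod_(i < n) (src_mean p (fi i) * src_var p (fi i)) != 0 ->
     receiver_computes g (fun x => \prod_(i < n) fi i (x i)) ->
     joint_secured p g (fun x => \prod_(i < n) fi i (x i)) ->
     forall i : 'I_n, src_recoverable g (fi i) /\ src_secured p g (fi i).
Proof.
move=> Hd fi Hnz [dec Hdec] Hsec i.
have Hm : forall j, tot k p (fi j) != 0.
  move=> j; move/prodf_neq0: Hnz => /(_ j isT); rewrite mulf_eq0 negb_or => /andP[H _].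
  by rewrite tot_eq.
have [w1 Hw1] : exists w1 : joint_space X k, forall j, fi j (w1 j).1 != 0.
  apply: (@choose_point n X k (fun j t => fi j t.1 != 0)) => j.
  have [x Hx | none] := pickP [pred x | fi j x != 0].
    by exists (x, Ordinal (key0 (k j))).
  move: (Hm j); rewrite tot_eq big1 ?eqxx // => x _.
  by have := none x; rewrite /= => /negbFE/eqP ->; rewrite mulr0.
have [w0 Hw0] := @pos_point R n X k p Hd.
split.
  exists (fun key yv => dec (finfun (dfwith (fun j => (w1 j).2) key))
     (finfun (dfwith (fun j => src_obs g (w1 j)) yv)) / \prod_(j | j != i) fi j (w1 j).1).
  move=> x key; rewrite -(upd_keys w1 x key) -(upd_obs g w1 x key) Hdec /joint_src.
  rewrite (prod_upd (fun j t => fi j t.1)) /= mulfK //.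
  by apply/prodf_neq0 => j _.
have HM : forall w : joint_space X k, (forall j, 0 < src_prob p (w j)) ->
    \prod_j rr p g (fi j) (w j) = \prod_j tot k p (fi j).
  move=> w Hw; rewrite -full_prod.
  have := Hsec _ (@joint_pos_D R n X k Y p g w Hd Hw); rewrite /expect /= => <-.
  by rewrite (@joint_ratio R n X k Y p g fi w).
have Mnz : \prod_j tot k p (fi j) != 0 by apply/prodf_neq0 => j _.
apply: const_to_secured => // t t' Ht Ht'.
have E := HM _ (upd_pos Hw0 Ht); have E' := HM _ (upd_pos Hw0 Ht').
rewrite (prod_upd (fun j t => rr p g (fi j) t)) in E.
rewrite (prod_upd (fun j t => rr p g (fi j) t)) in E'.
have Cnz : \prod_(j | j != i) rr p g (fi j) (w0 j) != 0.
  by apply: contra Mnz => /eqP C; rewrite -E C mulr0.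
by apply: (mulIf Cnz); rewrite E E'.
Qed.

Unset Implicit Arguments.
Unset Strict Implicit.

Theorem theorem2 (R : realFieldType) (n : nat) (X : 'I_n -> finType)
    (p : forall i : 'I_n, X i -> R) (k : 'I_n -> nat) (Y : 'I_n -> eqType)
    (g : forall i : 'I_n, X i -> 'I_(2 ^ k i) -> Y i) :
  (forall i : 'I_n, is_dist (p i)) ->
  (* Sufficiency *)
  (forall (L : nat) (F : 'I_L -> forall i : 'I_n, X i -> R),
     receiver_computes g (fun x => \sum_(l < L) \prod_(i < n) F l i (x i)) ->
     (forall (i : 'I_n) (l : 'I_L), src_secured p g (F l i)) ->
     joint_secured p g (fun x => \sum_(l < L) \prod_(i < n) F l i (x i)))
  /\
  (* Necessity, case (1): f = sum_i f_i(X_i) *)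
  (forall fi : forall i : 'I_n, X i -> R,
     receiver_computes g (fun x => \sum_(i < n) fi i (x i)) ->
     joint_secured p g (fun x => \sum_(i < n) fi i (x i)) ->
     forall i : 'I_n, src_recoverable g (fi i) /\ src_secured p g (fi i))
  /\
  (* Necessity, case (2): f = prod_i f_i(X_i), prod_i E[f_i] var[f_i] <> 0 *)
  (forall fi : forall i : 'I_n, X i -> R,
     \prod_(i < n) (src_mean p (fi i) * src_var p (fi i)) != 0 ->
     receiver_computes g (fun x => \prod_(i < n) fi i (x i)) ->
     joint_secured p g (fun x => \prod_(i < n) fi i (x i)) ->
     forall i : 'I_n, src_recoverable g (fi i) /\ src_secured p g (fi i)).
Proof.
move=> Hd; split; first by move=> L F _; exact: suff_part.
split; first exact: nec_sum.
exact: nec_prod.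
Qed.
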